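(* For the binary tree-shifts $X_{16}=(C,E)$ and $X_{18}=(C,G)$, the limit $h_{PS}$ exists and $$h_{PS}(X_{16})=h_{PS}(X_{18})=\frac14\sum_{n=2}^\infty\frac{1}{2^n}\log\operatorname{Fib}(n+1),$$ i.e. one quarter of $h_{PS}((A,D))$, where $(\operatorname{Fib}(m))_{m\ge1}=(1,1,2,3,5,\dots)$ is the Fibonacci sequence.
   Context: Binary tree-shifts: $k=2$, directions $a_1,a_2$, alphabet $\{0,1\}$; $(P,Q)$ is the set of trees $t:\{a_1,a_2\}^*\to\{0,1\}$ with $P_{t_x,t_{xa_1}}=1$, $Q_{t_x,t_{xa_2}}=1$ for all nodes $x$. Matrices: $A=\begin{pmatrix}1&1\\1&1\end{pmatrix}$, $C=\begin{pmatrix}0&1\\1&0\end{pmatrix}$, $D=\begin{pmatrix}1&1\\1&0\end{pmatrix}$, $E=\begin{pmatrix}1&0\\1&1\end{pmatrix}$, $G=\begin{pmatrix}1&1\\0&1\end{pmatrix}$. $p(n)$ is the number of allowed blocks of length $n$ (labellings $t|_{\Delta_n}$, $\Delta_n$ the words of length $\le n$), and $h_{PS}=\lim_{n\to\infty}\frac{\log p(n)}{1+2+\cdots+2^n}$. *)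

(* Defs.v *)
From HB Require Import structures.
From mathcomp Require Import all_boot all_order all_algebra.
From mathcomp Require Import all_classical all_reals all_analysis.
Set Implicit Arguments. Unset Strict Implicit. Unset Printing Implicit Defensive.
Import Order.TTheory GRing.Theory Num.Theory.

(* Alphabet {0,1} = 'I_2.  Directions a_1, a_2 are encoded by false, true;
   a node x of the tree is a word in seq bool, and x a_1 = rcons x false,
   x a_2 = rcons x true. *)
Definition alph := 'I_2.
Definition node := seq bool.
Definition tree := node -> alph.

Definition mx2 (a b c d : nat) : 'M[nat]_2 :=
  \matrix_(i < 2, j < 2)
    if val i == 0%N then (if val j == 0%N then a else b)
    else (if val j == 0%N then c else d).

Definition matrix_A : 'M[nat]_2 := mx2 1 1 1 1.
Definition matrix_C : 'M[nat]_2 := mx2 0 1 1 0.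
Definition matrix_D : 'M[nat]_2 := mx2 1 1 1 0.
Definition matrix_E : 'M[nat]_2 := mx2 1 0 1 1.
Definition matrix_G : 'M[nat]_2 := mx2 1 1 0 1.

Definition in_treeshift (P Q : 'M[nat]_2) (t : tree) : Prop :=
  forall x : node,
    P (t x) (t (rcons x false)) = 1%N /\ Q (t x) (t (rcons x true)) = 1%N.

Definition Delta (n : nat) : finType := {k : 'I_n.+1 & k.-tuple bool}.
Definition word_of {n} (w : Delta n) : node := tval (tagged w).

Definition allowed_block (P Q : 'M[nat]_2) (n : nat) (f : {ffun Delta n -> alph}) : Prop :=
  exists t : tree, in_treeshift P Q t /\ forall w : Delta n, f w = t (word_of w).

Definition pblocks (P Q : 'M[nat]_2) (n : nat) : nat :=
  #|[set f : {ffun Delta n -> alph} | `[< @allowed_block P Q n f >] ]|.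

Definition hPS_seq (R : realType) (P Q : 'M[nat]_2) (n : nat) : R :=
  ln ((pblocks P Q n)%:R : R) / ((\sum_(k < n.+1) 2 ^ k)%N)%:R.

(* Fibonacci: fib 1 = fib 2 = 1, fib 3 = 2, ... *)
Fixpoint fib (n : nat) : nat :=
  match n with
  | 0 => 0
  | 1 => 1
  | (m.+1 as k).+1 => fib k + fib m
  end.

(* Main.v *)
Require Import Defs.
From HB Require Import structures.
From mathcomp Require Import all_boot all_order all_algebra.
From mathcomp Require Import all_classical all_reals all_analysis.
Import Order.TTheory GRing.Theory Num.Theory.
Import numFieldNormedType.Exports.
Local Open Scope ring_scope.
Local Open Scope classical_set_scope.
Set Implicit Arguments. Unset Strict Implicit.
Section Comb.
Local Open Scope nat_scope.
Local Open Scope set_scope.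
Fixpoint T (n : nat) : finType :=
  match n with 0 => 'I_2 | m.+1 => ('I_2 * T m * T m)%type end.
Definition flip (c : 'I_2) : 'I_2 := if val c == 0%N then ord_max else ord0.
Definition ext (a : 'I_2) (w : seq bool) : 'I_2 := iter (count negb w) flip a.
Fixpoint lookup (n : nat) : T n -> node -> 'I_2 :=
  match n return T n -> node -> 'I_2 with
  | 0 => fun a w => ext a w
  | m.+1 => fun t w => match w with [::] => t.1.1 | b :: w' => @lookup m (if b then t.2 else t.1.2) w' end end.
Definition root n : T n -> 'I_2 := fun t => lookup t [::].
Fixpoint valid (P Q : 'M[nat]_2) n : T n -> bool :=
  match n return T n -> bool with
  | 0 => fun _ => true
  | m.+1 => fun t => [&& P t.1.1 (root t.1.2) == 1%N, Q t.1.1 (root t.2) == 1%N, @valid P Q m t.1.2 & @valid P Q m t.2] end.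
Fixpoint tab n (t : tree) : T n :=
  match n return T n with 0 => t [::] | m.+1 => (t [::], tab m (fun w => t (false :: w)), tab m (fun w => t (true :: w))) end.

Lemma ext_rcons a x b : ext a (rcons x b) = if b then ext a x else flip (ext a x).
Proof. rewrite /ext -cats1 count_cat /=; case: b => /=; by rewrite ?addn0 ?addn1. Qed.

Lemma treeshift_lookup (P Q : 'M[nat]_2) n (t : T n) :
  (forall c, P c (flip c) = 1) -> (forall c, Q c c = 1) ->
  valid P Q t -> in_treeshift P Q (lookup t).
Proof.
move=> hP hQ; elim: n t => [|n IH] t.
  by move=> _ x /=; rewrite !ext_rcons.
case: t => [[a l] r] /= /and4P[/eqP h1 /eqP h2 vl vr] x.
case: x => [|b x] /=; first by [].
by case: b; [apply: (IH r vr) | apply: (IH l vl)].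
Qed.

Lemma lookup_tab n (t : tree) w : size w <= n -> lookup (tab n t) w = t w.
Proof.
elim: n t w => [|n IH] t [|b w] //=; rewrite ltnS => hw.
by case: b; rewrite IH.
Qed.

Lemma shift_cons (P Q : 'M[nat]_2) t b : in_treeshift P Q t -> in_treeshift P Q (fun w => t (b :: w)).
Proof. by move=> h x; apply: (h (b :: x)). Qed.

Lemma tab_valid (P Q : 'M[nat]_2) n (t : tree) : in_treeshift P Q t -> valid P Q (tab n t).
Proof.
elim: n t => [|n IH] t //= h.
rewrite /root !lookup_tab //.
have [h1 _] := h [::]; have [_ h2] := h [::].
by rewrite /= h1 h2 !eqxx !IH //; apply: shift_cons.
Qed.

Lemma lookup_inj n (t1 t2 : T n) :
  (forall w, size w <= n -> lookup t1 w = lookup t2 w) -> t1 = t2.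
Proof.
elim: n t1 t2 => [|n IH] t1 t2 h; first by have := h [::] isT.
case: t1 t2 h => [[a1 l1] r1] [[a2 l2] r2] h.
have ha := h [::] isT.
have hl : l1 = l2 by apply: IH => w hw; exact: (h (false :: w) hw).
have hr : r1 = r2 by apply: IH => w hw; exact: (h (true :: w) hw).
by simpl in ha; rewrite ha hl hr.
Qed.

Lemma size_word n (d : Delta n) : size (word_of d) <= n.
Proof. case: d => k w; rewrite /word_of /= size_tuple; by rewrite -ltnS. Qed.

Lemma word_surj n w : size w <= n -> exists d : Delta n, word_of d = w.
Proof.
move=> hw; have hw' : size w < n.+1 by [].
by exists (existT (fun k : 'I_n.+1 => k.-tuple bool) (Ordinal hw') (in_tuple w)).
Qed.

Definition psi n (t : T n) : {ffun Delta n -> alph} := [ffun d => lookup t (word_of d)].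

Lemma psi_inj n : injective (@psi n).
Proof.
move=> t1 t2 h; apply: lookup_inj => w hw.
have [d <-] := word_surj hw.
by move: h => /ffunP /(_ d); rewrite !ffunE.
Qed.

Lemma pblocksE (P Q : 'M[nat]_2) n :
  (forall c, P c (flip c) = 1) -> (forall c, Q c c = 1) ->
  pblocks P Q n = #|[set t : T n | valid P Q t]|.
Proof.
move=> hP hQ; rewrite /pblocks -(card_imset _ (@psi_inj n)); apply: eq_card => f; rewrite inE; apply/asboolP/imsetP.
  case=> t [ht hf]; exists (tab n t); first by rewrite inE tab_valid.
  by apply/ffunP => d; rewrite ffunE hf lookup_tab // size_word.
case=> t; rewrite inE => vt ->; exists (lookup t); split.
  exact: treeshift_lookup.
by move=> d; rewrite ffunE.
Qed.
End Comb.
Section Comb2.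
Local Open Scope nat_scope.
Local Open Scope set_scope.
Variables (P Q : 'M[nat]_2).
Definition cnt n (c : 'I_2) := \sum_(t : T n) (valid P Q t && (root t == c)).

Lemma sum_I2 (F : 'I_2 -> nat) : \sum_i F i = F ord0 + F ord_max.
Proof. rewrite big_ord_recl big_ord1; congr (_ + F _); exact: val_inj. Qed.

Lemma sum_pair (A B : finType) (F : A * B -> nat) :
  \sum_(x : A * B) F x = \sum_a \sum_b F (a, b).
Proof. by rewrite pair_big; apply: eq_bigr => [[]]. Qed.

Lemma card_valid n : #|[set t : T n | valid P Q t]| = cnt n ord0 + cnt n ord_max.
Proof.
rewrite -sum_I2 /cnt exchange_big /= -sum1_card big_mkcond /=.
apply: eq_bigr => t _; rewrite inE.
rewrite (bigD1 (root t)) //= eqxx andbT big1 ?addn0; first by case: (valid P Q t).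
by move=> d /negbTE hd; rewrite eq_sym hd andbF.
Qed.

Lemma cnt0 c : cnt 0 c = 1.
Proof.
rewrite /cnt (bigD1 c) //= /root /= /ext /= eqxx big1 // => d hd.
by rewrite (negbTE hd).
Qed.

Lemma split_aux n (w : 'I_2 -> bool) : \sum_(l : T n) (w (root l) && valid P Q l) =
 \sum_d \sum_(l : T n) (w d * (valid P Q l && (root l == d))).
Proof.
rewrite exchange_big /=; apply: eq_bigr => l _.
rewrite (bigD1 (root l)) //= eqxx andbT big1 ?addn0; first by case: (w _); case: (valid _ _ _).
by move=> d /negbTE hd; rewrite eq_sym hd andbF muln0.
Qed.

Lemma split_root n (w : 'I_2 -> bool) :
  \sum_(l : T n) (w (root l) && valid P Q l) = \sum_d w d * cnt n d.
Proof. rewrite split_aux; apply: eq_bigr => d _; by rewrite /cnt big_distrr. Qed.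

Lemma cntS n c : cnt n.+1 c =
  (\sum_d (P c d == 1) * cnt n d) * (\sum_d (Q c d == 1) * cnt n d).
Proof.
rewrite -!split_root big_distrlr /= /cnt sum_pair /= sum_pair /=.
rewrite (bigD1 c) //= [X in _ + X]big1 ?addn0.
  apply: eq_bigr => l _; apply: eq_bigr => r _.
  rewrite /root /= eqxx andbT.
  by case: (P c _ == 1); case: (Q c _ == 1); case: (valid P Q l); case: (valid P Q r).
move=> a ha; apply: big1 => l _; apply: big1 => r _.
by rewrite /root /= (negbTE ha) andbF.
Qed.
End Comb2.
Section Comb3.
Local Open Scope nat_scope.
Local Open Scope set_scope.
Lemma I2E (c : 'I_2) : c = ord0 \/ c = ord_max.
Proof. case: c => [[|[|k]] h]; [left|right|by []]; exact: val_inj. Qed.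

Lemma hC c : matrix_C c (flip c) = 1.
Proof. by case: (I2E c) => ->; rewrite /matrix_C /mx2 mxE. Qed.
Lemma hE c : matrix_E c c = 1.
Proof. by case: (I2E c) => ->; rewrite /matrix_E /mx2 mxE. Qed.
Lemma hG c : matrix_G c c = 1.
Proof. by case: (I2E c) => ->; rewrite /matrix_G /mx2 mxE. Qed.

Fixpoint ab n : nat * nat := match n with 0 => (1, 1) | m.+1 => ((ab m).2 * (ab m).1, (ab m).1 * ((ab m).1 + (ab m).2)) end.

Lemma cntCE n : cnt matrix_C matrix_E n ord0 = (ab n).1 /\ cnt matrix_C matrix_E n ord_max = (ab n).2.
Proof.
elim: n => [|n [IH1 IH2]]; first by rewrite !cnt0.
rewrite !cntS !sum_I2 IH1 IH2 /matrix_C /matrix_E /mx2 !mxE /=.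
by rewrite !mul0n !mul1n !add0n !addn0.
Qed.

Lemma cntCG n : cnt matrix_C matrix_G n ord0 = (ab n).2 /\ cnt matrix_C matrix_G n ord_max = (ab n).1.
Proof.
elim: n => [|n [IH1 IH2]]; first by rewrite !cnt0.
rewrite !cntS !sum_I2 IH1 IH2 /matrix_C /matrix_G /mx2 !mxE /=.
by rewrite !mul0n !mul1n !add0n !addn0 addnC.
Qed.

Lemma pCE n : pblocks matrix_C matrix_E n = (ab n).1 + (ab n).2.
Proof. by rewrite (pblocksE _ hC hE) card_valid; case: (cntCE n) => -> ->. Qed.
Lemma pCG n : pblocks matrix_C matrix_G n = (ab n).1 + (ab n).2.
Proof. by rewrite (pblocksE _ hC hG) card_valid; case: (cntCG n) => -> ->; rewrite addnC. Qed.
End Comb3.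
From mathcomp Require Import zify.
Section NatFacts.
Local Open Scope nat_scope.
Lemma fib_pos n : 0 < fib n.+1.
Proof.
suff : 0 < fib n.+1 /\ 0 < fib n.+2 by case.
elim: n => [|n [h1 h2]] //=; split => //; rewrite addn_gt0 h2 //.
Qed.
Lemma fibSS n : fib n.+2 = fib n.+1 + fib n.
Proof. by []. Qed.
Lemma fib_le n : fib n.+1 <= 2 ^ n.
Proof.
suff : fib n.+1 <= 2 ^ n /\ fib n.+2 <= 2 ^ n.+1 by case.
elim: n => [|n [h1 h2]] //; split => //.
rewrite fibSS !expnS; rewrite expnS in h2; lia.
Qed.
Lemma fib3 n : fib n.+1 <= fib n.+3 <= 3 * fib n.+1.
Proof.
have h3 := fibSS n.+1; have h2 := fibSS n.
have h4 : fib n <= fib n.+1 by case: n {h3 h2} => [|n] //; rewrite fibSS leq_addr.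
lia.
Qed.
Lemma ab_pos n : 0 < (ab n).1 /\ 0 < (ab n).2.
Proof.
elim: n => [|n [h1 h2]] //=; split; first by rewrite muln_gt0 h1 h2.
by rewrite muln_gt0 h1 addn_gt0 h1.
Qed.
Lemma abS1 n : (ab n.+1).1 = (ab n).2 * (ab n).1. Proof. by []. Qed.
Lemma abS2 n : (ab n.+1).2 = (ab n).1 * ((ab n).1 + (ab n).2). Proof. by []. Qed.
Lemma ab_inv n : fib n.+1 * (ab n).2 = fib n.+2 * (ab n).1.
Proof.
elim: n => [|n IH] //.
rewrite abS1 abS2 (fibSS n.+1); move: IH.
set a := (ab n).1; set b := (ab n).2; set f1 := fib n.+1; set f2 := fib n.+2 => IH.
nia.
Qed.
Lemma ab_rec n : (ab n.+1).1 * fib n.+1 = (ab n).1 * (ab n).1 * fib n.+2.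
Proof.
have := ab_inv n; rewrite abS1.
set a := (ab n).1; set b := (ab n).2; set f1 := fib n.+1; set f2 := fib n.+2 => IH.
nia.
Qed.
Lemma p_eq n : ((ab n).1 + (ab n).2) * fib n.+1 = (ab n).1 * fib n.+3.
Proof.
have := ab_inv n; rewrite [fib n.+3]fibSS.
set a := (ab n).1; set b := (ab n).2; set f1 := fib n.+1; set f2 := fib n.+2 => IH.
nia.
Qed.
Lemma sum2 n : (\sum_(k < n.+1) 2 ^ k).+1 = 2 ^ n.+1.
Proof.
elim: n => [|n IH]; first by rewrite big_ord1.
by rewrite big_ord_recr /= -addSn IH (expnS 2 n.+1) mul2n addnn.
Qed.
End NatFacts.
From mathcomp Require Import ring lra.
Section Real.
Variable R : realType.
Definition lF (k : nat) : R := ln (fib k)%:R.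
Definition S (N : nat) : R := \sum_(2 <= n < N) ln ((fib n.+1)%:R : R) / 2 ^+ n.
Definition xa (n : nat) : R := ln ((ab n).1)%:R.

Lemma lnMn (m k : nat) : (0 < m)%N -> (0 < k)%N -> ln ((m * k)%:R : R) = ln m%:R + ln k%:R.
Proof. by move=> hm hk; rewrite natrM lnM // posrE ltr0n. Qed.

Lemma R1 n : xa n.+1 + lF n.+1 = 2 * xa n + lF n.+2.
Proof.
have [h1 h2] := ab_pos n; have [h3 h4] := ab_pos n.+1.
rewrite /xa /lF -lnMn ?fib_pos // ab_rec lnMn ?muln_gt0 ?h1 ?fib_pos // lnMn //.
by rewrite mulr2n mulrDl mul1r.
Qed.

Lemma R2 n : ln (((ab n).1 + (ab n).2)%:R : R) + lF n.+1 = xa n + lF n.+3.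
Proof.
have [h1 h2] := ab_pos n.
by rewrite /xa /lF -lnMn ?fib_pos ?addn_gt0 ?h1 // p_eq lnMn ?fib_pos.
Qed.

Lemma fib1R : (fib 1)%:R = 1 :> R. Proof. by []. Qed.
Lemma fib2R : (fib 2)%:R = 1 :> R. Proof. by []. Qed.

Lemma S_rec N : S N.+1 = S N + lF N.+1 / 2 ^+ N.
Proof.
case: N => [|[|N]].
- by rewrite /S !big_geq // /lF fib1R ln1 mul0r addr0.
- by rewrite /S !big_geq // /lF fib2R ln1 mul0r addr0.
- by rewrite /S big_nat_recr.
Qed.

Lemma R3 n : xa n / 2 ^+ n = S n.+1 - S n / 2.
Proof.
elim: n => [|n IH].
  by rewrite /xa /= /S !big_geq // ln1 mul0r mul0r subr0.
have h2 : (2 ^+ n : R) != 0 by rewrite expf_neq0 // pnatr_eq0.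
have IH' : xa n = 2 ^+ n * (S n.+1 - S n / 2) by rewrite -IH mulrC divfK.
have hx : xa n.+1 = 2 * xa n + lF n.+2 - lF n.+1 by rewrite -R1 addrK.
rewrite hx IH' (S_rec n.+1) (S_rec n) exprS.
field; exact: h2.
Qed.
End Real.
Section Real2.
Variable R : realType.
Local Notation lF := (@lF R).
Local Notation S := (@S R).

Lemma lF_ge0 k : (0 < k)%N -> 0 <= lF k.
Proof. by case: k => // k _; rewrite /lF ln_ge0 // ler1n fib_pos. Qed.

Lemma lF_le n : lF n.+1 <= n%:R * ln 2.
Proof.
rewrite /lF mulr_natl -lnXn // -natrX ler_ln ?posrE ?ltr0n ?fib_pos ?expn_gt0 //.
by rewrite ler_nat fib_le.
Qed.

Lemma S_nd : nondecreasing_seq S.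
Proof.
apply/nondecreasing_seqP => n; rewrite S_rec lerDl divr_ge0 ?lF_ge0 //.

Qed.

Lemma S_bound_aux N : S N <= 2 * ln 2 - (N.*2.+2)%:R * (ln 2 / 2 ^+ N).
Proof.
have l2 : 0 <= ln (2 : R) by rewrite ln_ge0 // ler1n.
elim: N => [|N IH].
  by rewrite /S big_geq // expr0 divr1 mulr2n mulrDl mul1r; lra.
rewrite S_rec.
have h2 : (0 : R) < 2 ^+ N by rewrite exprn_gt0.
have ht : lF N.+1 / 2 ^+ N <= N%:R * (ln 2 / 2 ^+ N).
  by rewrite mulrA ler_pM2r ?invr_gt0 // lF_le.
have e : (N.+1.*2.+2)%:R * (ln (2:R) / 2 ^+ N.+1) =
         (N.*2.+2)%:R * (ln (2:R) / 2 ^+ N) - N%:R * (ln (2:R) / 2 ^+ N).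
  rewrite exprS (_ : N.+1.*2.+2 = N * 2 + 4)%N; last by rewrite -!muln2; lia.
  rewrite (_ : N.*2.+2 = N * 2 + 2)%N; last by rewrite -!muln2; lia.
  rewrite !natrD !natrM; field.
  by rewrite lt0r_neq0.
rewrite e; lra.
Qed.

Lemma S_bound N : S N <= 2 * ln 2.
Proof.
apply: le_trans (S_bound_aux N) _; rewrite lerBlDr lerDl mulr_ge0 //.
by rewrite divr_ge0 ?exprn_ge0 // ln_ge0 // ler1n.
Qed.
End Real2.
Section Real3.
Variable R : realType.
Local Notation lF := (@lF R).
Local Notation S := (@S R).
Definition D n : R := ((\sum_(k < n.+1) 2 ^ k)%N)%:R.

Lemma D_eq n : D n + 1 = 2 ^+ n.+1.
Proof. by rewrite /D natr1 sum2 natrX. Qed.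

Lemma D_ge n : 2 ^+ n <= D n.
Proof.
have := D_eq n; rewrite exprS => e.
have h : (1 : R) <= 2 ^+ n by rewrite exprn_ege1 // ler1n.
lra.
Qed.

Lemma D_pos n : 0 < D n.
Proof. apply: lt_le_trans (D_ge n); exact: exprn_gt0. Qed.

Lemma invD_cvg : (fun n => (D n)^-1) @ \oo --> 0.
Proof.
apply: (@squeeze_cvgr _ _ _ _ (cst 0) (GRing.exp (2^-1 : R))); last 2 first.
- exact: cvg_cst.
- by apply: cvg_expr; rewrite ger0_norm ?invr_ge0 // invf_lt1 // ltr1n.
apply: nearW => n; rewrite /= invr_ge0 (ltW (D_pos n)) /= exprVn.
by rewrite lef_pV2 ?posrE ?D_pos ?exprn_gt0 // D_ge.
Qed.

Lemma fa_cvg : (fun n => 2 ^+ n / D n) @ \oo --> (2^-1 : R).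
Proof.
have e : (fun n => 2 ^+ n / D n) = (fun n => 2^-1 + (D n)^-1 * 2^-1).
  apply: funext => n; have := D_eq n; rewrite exprS => e.
  have hD : D n != 0 by rewrite lt0r_neq0 // D_pos.
  have -> : (2 ^+ n : R) = (D n + 1) / 2 by rewrite e; field.
  by field.
rewrite e.
suff H : (fun n => 2^-1 + (D n)^-1 * 2^-1) @ \oo --> (2^-1 + 0 * 2^-1 : R).
  by rewrite mul0r addr0 in H.
apply: cvgD; first exact: cvg_cst.
exact: cvgMr_tmp invD_cvg.
Qed.

Lemma e_bounds n : 0 <= lF n.+3 - lF n.+1 <= ln 3.
Proof.
have /andP[h1 h2] := fib3 n.
have p1 := fib_pos n; have p3 := fib_pos n.+2.
rewrite subr_ge0 lerBlDr /lF ler_ln ?posrE ?ltr0n // ler_nat h1 /=.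
rewrite -lnMn // ler_ln ?posrE ?ltr0n ?muln_gt0 ?p1 ?p3 // ler_nat; exact: h2.
Qed.

Lemma e_cvg : (fun n => (lF n.+3 - lF n.+1) / D n) @ \oo --> 0.
Proof.
apply: (@squeeze_cvgr _ _ _ _ (cst 0) (fun n => ln 3 * (D n)^-1)); last 2 first.
- exact: cvg_cst.
- have H := cvgMl_tmp (a := ln (3:R)) invD_cvg.
  rewrite mulr0 in H; exact: H.
apply: nearW => n; have /andP[h1 h2] := e_bounds n.
have hD := D_pos n.
rewrite /= divr_ge0 ?(ltW hD) //= ler_pM2r ?invr_gt0 //.
Qed.
End Real3.
Lemma hPS_eq (R : realType) (P Q : 'M[nat]_2) :
  (forall n, pblocks P Q n = ((ab n).1 + (ab n).2)%N) ->
  hPS_seq R P Q = (fun n => 2 ^+ n / D R n * (S R n.+1 - S R n / 2) + (lF R n.+3 - lF R n.+1) / D R n).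
Proof.
move=> hp; apply: funext => n; rewrite /hPS_seq hp -/(D R n).
have h2 : (2 ^+ n : R) != 0 by rewrite expf_neq0 // pnatr_eq0.
have hx : xa R n = 2 ^+ n * (S R n.+1 - S R n / 2) by rewrite -R3 mulrC divfK.
have hl : ln (((ab n).1 + (ab n).2)%:R : R) = xa R n + lF R n.+3 - lF R n.+1.
  by rewrite -R2 addrK.
rewrite hl hx; ring.
Qed.

Lemma hPS_cvg (R : realType) (P Q : 'M[nat]_2) (L : R) :
  (forall n, pblocks P Q n = ((ab n).1 + (ab n).2)%N) ->
  S R @ \oo --> L -> hPS_seq R P Q @ \oo --> L / 4.
Proof.
move=> hp hS; rewrite hPS_eq //.
have hS1 : (fun n => S R n.+1) @ \oo --> L by rewrite (cvg_shiftS (S R)).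
have hS2 : (fun n => S R n / 2) @ \oo --> L / 2 by exact: cvgMr_tmp hS.
suff H : (fun n => 2 ^+ n / D R n * (S R n.+1 - S R n / 2) + (lF R n.+3 - lF R n.+1) / D R n)
   @ \oo --> (2^-1 * (L - L / 2) + 0).
  have -> : L / 4 = 2^-1 * (L - L / 2) + 0 by field.
  exact: H.
apply: cvgD; last exact: e_cvg.
apply: cvgM; first exact: fa_cvg.
exact: cvgB hS1 hS2.
Qed.

Theorem mainTheorem18 (R : realType) :
  exists L : R,
    (fun N : nat => \sum_(2 <= n < N) ln ((fib n.+1)%:R : R) / 2 ^+ n) @ \oo --> L /\
    hPS_seq R matrix_C matrix_E @ \oo --> L / 4 /\
    hPS_seq R matrix_C matrix_G @ \oo --> L / 4.
Proof.
have hS : S R @ \oo --> sup (range (S R)).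
  apply: nondecreasing_cvgn; first exact: S_nd.
  by exists (2 * ln 2) => _ [n _ <-]; exact: S_bound.
exists (sup (range (S R))); split; first exact: hS.
by split; apply: hPS_cvg hS; [exact: pCE | exact: pCG].
Qed.
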